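(* Let $\mathcal{X}\subseteq\mathbb{R}^d$ be nonempty, closed and convex, and let $f:\mathbb{R}^d\to\mathbb{R}$ be differentiable (not necessarily convex) and $L$-smooth on an open set containing $\mathcal{X}$; assume $f_\star=\min_{x\in\mathcal{X}}f(x)$ is attained. Fix $\gamma\in(0,1/L]$ and define $G_\gamma(x):=\frac1\gamma\big(x-\Pi_{\mathcal{X}}(x-\gamma\nabla f(x))\big)$, where $\Pi_{\mathcal{X}}$ is the Euclidean projection onto $\mathcal{X}$. Let $x_0\in\mathcal{X}$ and $x_{k+1}\in\operatorname{arg\,min}_{z\in\mathcal{X}\cap\mathcal{B}(x_k,t_k)}\langle\nabla f(x_k),z\rangle$ with $t_k:=\gamma\|G_\gamma(x_k)\|$. Then for every $k\ge0$, $f(x_{k+1})\le f(x_k)-\frac\gamma2\|G_\gamma(x_k)\|^2$, and for every $K\ge1$, $$\min_{0\le k\le K-1}\|G_\gamma(x_k)\|^2\le\frac{2(f(x_0)-f_\star)}{\gamma K}.$$ In particular, for $\gamma=1/L$, $\min_{0\le k\le K-1}\|G_{1/L}(x_k)\|^2\le\frac{2L(f(x_0)-f_\star)}{K}$.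
   Context: $\|\cdot\|$ is the Euclidean norm, $\mathcal{B}(x,t):=\{y:\|y-x\|\le t\}$; $L$-smooth means $\nabla f$ is $L$-Lipschitz. *)

(* Defs.v *)
From HB Require Import structures.
From mathcomp Require Import all_boot all_order all_algebra.
From mathcomp Require Import all_classical all_reals all_analysis.
Set Implicit Arguments. Unset Strict Implicit. Unset Printing Implicit Defensive.
Import Order.TTheory GRing.Theory Num.Theory.
Import numFieldNormedType.Exports.
Local Open Scope classical_set_scope.
Local Open Scope ring_scope.

Section Defs.
Variables (R : realType) (d : nat).
Notation V := 'rV[R]_d.

Definition dotp (u v : V) : R := \sum_(i < d) u ord0 i * v ord0 i.
Definition enorm (u : V) : R := Num.sqrt (dotp u u).

Definition eball (x : V) (t : R) : set V := [set y | enorm (y - x) <= t].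

Definition is_proj (X : set V) (y p : V) : Prop :=
  X p /\ forall z, X z -> enorm (y - p) <= enorm (y - z).

Definition is_gradient (f : V -> R) (x g : V) : Prop :=
  differentiable f x /\ forall v : V, 'd f x v = dotp g v.

Definition grad_map (P : V -> V) (grad : V -> V) (gamma : R) (x : V) : V :=
  gamma^-1 *: (x - P (x - gamma *: grad x)).

Definition is_argmin_lin (S : set V) (g z : V) : Prop :=
  S z /\ forall w, S w -> dotp g z <= dotp g w.
End Defs.

(* Main.v *)
Require Import Defs.
From HB Require Import structures.
From mathcomp Require Import all_boot all_order all_algebra.
From mathcomp Require Import all_classical all_reals all_analysis.
From mathcomp Require Import ring lra.
Import Order.TTheory GRing.Theory Num.Theory.
Import numFieldNormedType.Exports.
Local Open Scope classical_set_scope.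
Local Open Scope ring_scope.
Set Implicit Arguments. Unset Strict Implicit.

Section Aux.
Variables (R : realType) (d : nat).
Notation V := 'rV[R]_d.
Implicit Types u v w : V.

Lemma dotpC u v : dotp u v = dotp v u.
Proof. by apply: eq_bigr => i _; rewrite mulrC. Qed.
Lemma dotpDl u v w : dotp (u + v) w = dotp u w + dotp v w.
Proof. by rewrite /dotp -big_split; apply: eq_bigr => i _; rewrite mxE mulrDl. Qed.
Lemma dotpZl (c : R) u v : dotp (c *: u) v = c * dotp u v.
Proof. by rewrite /dotp mulr_sumr; apply: eq_bigr => i _; rewrite mxE mulrA. Qed.
Lemma dotpNl u v : dotp (- u) v = - dotp u v.
Proof. by rewrite -scaleN1r dotpZl mulN1r. Qed.
Lemma dotpBl u v w : dotp (u - v) w = dotp u w - dotp v w.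
Proof. by rewrite dotpDl dotpNl. Qed.
Lemma dotpDr u v w : dotp w (u + v) = dotp w u + dotp w v.
Proof. by rewrite dotpC dotpDl !(dotpC w). Qed.
Lemma dotpZr (c : R) u v : dotp v (c *: u) = c * dotp v u.
Proof. by rewrite dotpC dotpZl dotpC. Qed.
Lemma dotpBr u v w : dotp w (u - v) = dotp w u - dotp w v.
Proof. by rewrite dotpC dotpBl !(dotpC w). Qed.
Lemma dotp_ge0 u : 0 <= dotp u u.
Proof. by apply: sumr_ge0 => i _; rewrite sqr_ge0. Qed.
Lemma enorm2 u : enorm u ^+ 2 = dotp u u.
Proof. by rewrite /enorm sqr_sqrtr // dotp_ge0. Qed.
Lemma enorm_ge0 u : 0 <= enorm u.
Proof. exact: sqrtr_ge0. Qed.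
Lemma enorm_le u v : (enorm u <= enorm v) = (dotp u u <= dotp v v).
Proof. by rewrite /enorm ler_sqrt // dotp_ge0. Qed.
Lemma enormZ (c : R) u : enorm (c *: u) = `|c| * enorm u.
Proof. by rewrite /enorm dotpZl dotpZr mulrA sqrtrM ?sqr_ge0 // -expr2 sqrtr_sqr. Qed.
Lemma enormN u : enorm (- u) = enorm u.
Proof. by rewrite -scaleN1r enormZ normrN normr1 mul1r. Qed.
Lemma enormB u v : enorm (u - v) = enorm (v - u).
Proof. by rewrite -enormN opprB. Qed.

Lemma dotp_amgm (a : R) u v : 0 < a ->
  2 * a * dotp u v <= dotp u u + a ^+ 2 * dotp v v.
Proof.
move=> a0; have := dotp_ge0 (u - a *: v).
rewrite !dotpBl !dotpBr !dotpZl !dotpZr (dotpC v u).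
move=> h; rewrite -subr_ge0; apply: le_trans h _; rewrite le_eqVlt; apply/orP; left; apply/eqP; ring.
Qed.

Lemma expand_sq w u (s : R) :
  dotp (w - s *: u) (w - s *: u) = dotp w w - 2 * s * dotp w u + s ^+ 2 * dotp u u.
Proof. rewrite !dotpBl !dotpBr !dotpZl !dotpZr (dotpC u w); ring. Qed.

Lemma conv_mem (X : set V) z p (s : R) : convex_set X -> X z -> X p -> 0 <= s -> s <= 1 ->
  X (s *: z + (1 - s) *: p).
Proof.
move=> cX Xz Xp s0 s1.
have := cX z p (Itv01 s0 s1) (mem_set Xz) (mem_set Xp).
by move/set_mem.
Qed.

Lemma proj_vi (X : set V) y p z : convex_set X -> is_proj X y p -> X z ->
  dotp (y - p) (z - p) <= 0.
Proof.
move=> cX [Xp pmin] Xz.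
set a := dotp (y - p) (z - p); set b := dotp (z - p) (z - p).
have b0 : 0 <= b by apply: dotp_ge0.
have key s : 0 < s -> s <= 1 -> 2 * a <= s * b.
  move=> s0 s1.
  have := pmin _ (conv_mem cX Xz Xp (ltW s0) s1).
  have -> : y - (s *: z + (1 - s) *: p) = (y - p) - s *: (z - p).
    rewrite scalerBl scale1r scalerBr !opprD !opprK !addrA.
    by rewrite (addrAC y).

  rewrite enorm_le expand_sq -/a -/b.
  move=> h.
  have : s * (2 * a) <= s * (s * b) by nra.
  by rewrite ler_pM2l.
rewrite leNgt; apply/negP => a0.
have ab0 : 0 < a + b by lra.
have s0 : 0 < a / (a + b) by rewrite divr_gt0.
have s1 : a / (a + b) <= 1 by rewrite ler_pdivrMr // mul1r; lra.
have := key _ s0 s1.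
rewrite mulrAC => h.
have : 2 * a * (a + b) <= a * b.
  move: h; rewrite -(ler_pM2r ab0) => h; apply: (le_trans h).
  by rewrite divfK ?gt_eqF.
move=> h2; clearbody a b; nra.
Qed.
End Aux.

Lemma quad_der (R : realType) (c k t : R) :
  is_derive t 1 ((@id R) * cst c + cst k * ((@id R) * (@id R))) (c + k * (t + t)).
Proof.
apply: is_derive_eq.
rewrite !scaler0 add0r addr0 /cst /=. rewrite -![_%:A]/(_ * 1) !mulr1. by [].
Qed.

Section Descent.
Variables (R : realType) (d : nat).
Notation V := 'rV[R]_d.

Lemma line_der (f : V -> R) (grad : V -> V) (x v : V) (t : R) :
  (forall y, is_gradient f y (grad y)) ->
  is_derive t 1 (fun s : R => f (x + s *: v)) (dotp (grad (x + t *: v)) v).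
Proof.
move=> hg.
have E : (fun h : R => h^-1 *: (((fun s : R => f (x + s *: v)) \o shift t) (h *: 1) - f (x + t *: v)))
   = (fun h : R => h^-1 *: ((f \o shift (x + t *: v)) (h *: v) - f (x + t *: v))).
  apply: funext => h /=.
  by rewrite -[h%:A]/(h * 1) mulr1 scalerDl addrCA.
have [df dv] := hg (x + t *: v).
apply: DeriveDef.
  by rewrite /derivable E; apply: diff_derivable.
by rewrite /derive E -/(derive f _ v) deriveE // dv.
Qed.

Lemma descent (U : set V) f grad (L : R) (x y : V) :
  (forall y, is_gradient f y (grad y)) -> 0 < L ->
  (forall y z, U y -> U z -> enorm (grad y - grad z) <= L * enorm (y - z)) ->
  (forall t, 0 <= t -> t <= 1 -> U (x + t *: (y - x))) ->
  f y <= f x + dotp (grad x) (y - x) + L / 2 * dotp (y - x) (y - x).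
Proof.
move=> hg L0 Lip hU.
set v := y - x; set c := dotp (grad x) v; set n := dotp v v.
pose phi := fun s : R => f (x + s *: v).
pose q := (@id R) * cst c + cst (L/2*n) * ((@id R) * (@id R)).
pose psi := phi - q.
pose dfun := fun t => dotp (grad (x + t *: v)) v - (c + L/2*n*(t+t)).
have dpsi (t : R) : is_derive t (1:R^o) (psi : R^o -> R^o) (dfun t).
  apply: is_deriveB; [exact: line_der | exact: quad_der].
have cont : {within `[0, 1], continuous psi}.
  apply: derivable_within_continuous => t _; by case: (dpsi t).
have [z z01 Hz] := @MVT R psi dfun 0 1 ltr01 (fun t _ => dpsi t) cont.
have e1 : psi 1 = f y - (c + L / 2 * n).
  change (f (x + 1 *: v) - (1 * c + L / 2 * n * (1 * 1)) = f y - (c + L / 2 * n)).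
  by rewrite scale1r /v (addrC x) subrK !mul1r mulr1.
have e0 : psi 0 = f x.
  change (f (x + 0 *: v) - (0 * c + L / 2 * n * (0 * 0)) = f x).
  by rewrite scale0r addr0 !mul0r mulr0 addr0 subr0.
have [z0 z1] : 0 < z /\ z < 1 by move: z01; rewrite in_itv /= => /andP.
have Uz := hU z (ltW z0) (ltW z1).
have Ux : U x by have := hU 0 (lexx _) ler01; rewrite scale0r addr0.
set w := grad (x + z *: v) - grad x.
have hw : enorm w <= enorm ((L * z) *: v).
  have -> : enorm ((L * z) *: v) = L * enorm ((x + z *: v) - x).
    by rewrite (addrC x) addrK !enormZ !ger0_norm ?mulr_ge0 ?ltW // mulrA.
  exact: Lip.
move: hw; rewrite enorm_le dotpZl dotpZr -/n => hw.
have am := dotp_amgm w v (mulr_gt0 L0 z0).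
have hP : dotp w v <= L * z * n.
  have a0 := mulr_gt0 L0 z0.
  move: am hw a0; rewrite expr2; set a := L * z; set P := dotp w v; set W := dotp w w.
  move=> am hw a0.
  rewrite -/n in am.
  have : 2 * a * (P - a * n) <= 0 by clearbody a P W; nra.
  rewrite pmulr_rle0 ?mulr_gt0 //; lra.
have : dfun z <= 0.
  rewrite /dfun -/c.
  have -> : dotp (grad (x + z *: v)) v = dotp w v + c by rewrite /w dotpBl subrK.
  lra.
move: Hz; rewrite e1 e0 subr0 mulr1 => Hz.
lra.
Qed.

Lemma step (X U : set V) f grad (L gamma : R) (P : V -> V) (xk xn : V) :
  convex_set X -> (forall y, is_gradient f y (grad y)) ->
  X `<=` U -> 0 < L ->
  (forall y z, U y -> U z -> enorm (grad y - grad z) <= L * enorm (y - z)) ->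
  (forall y, is_proj X y (P y)) ->
  0 < gamma -> gamma <= L^-1 -> X xk ->
  is_argmin_lin (X `&` eball xk (gamma * enorm (grad_map P grad gamma xk))) (grad xk) xn ->
  f xn <= f xk - gamma / 2 * enorm (grad_map P grad gamma xk) ^+ 2.
Proof.
move=> cX hg XU L0 Lip hP g0 gL Xk [[Xn Bn] amin].
set g := grad xk; set p := P (xk - gamma *: g); set u := xk - p.
have eG : grad_map P grad gamma xk = gamma^-1 *: u by [].
have tk : gamma * enorm (grad_map P grad gamma xk) = enorm u.
  by rewrite eG enormZ ger0_norm ?invr_ge0 ?ltW // mulrA mulfV ?gt_eqF // mul1r.
rewrite tk in Bn amin.
have G2 : enorm (grad_map P grad gamma xk) ^+ 2 = gamma^-1 ^+ 2 * dotp u u.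
  by rewrite eG enormZ ger0_norm ?invr_ge0 ?ltW // exprMn enorm2.
rewrite G2.
have [Xp _] := hP (xk - gamma *: g).
have vi := proj_vi cX (hP (xk - gamma *: g)) Xk.
rewrite -/p in vi.
have e1 : xk - gamma *: g - p = u - gamma *: g by rewrite /u addrAC.
rewrite e1 dotpBl dotpZl in vi.
have pB : eball xk (enorm u) p by rewrite /eball /= enormB.
have hn := amin p (conj Xp pB).
have Bn' : dotp (xn - xk) (xn - xk) <= dotp u u by rewrite -enorm_le.
have hU : forall t, 0 <= t -> t <= 1 -> U (xk + t *: (xn - xk)).
  move=> t t0 t1; apply: XU.
  have -> : xk + t *: (xn - xk) = t *: xn + (1 - t) *: xk.
    by rewrite scalerBr scalerBl scale1r addrCA addrA.
  exact: conv_mem.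
have dl := descent hg L0 Lip hU.
rewrite -/g dotpBr in dl.
have gL' : L * gamma <= 1 by rewrite -(ler_pM2l L0) mulfV ?gt_eqF // in gL.
have vi2 : dotp u u - gamma * (dotp g xk - dotp g p) <= 0 by rewrite -dotpBr; exact: vi.
rewrite -/g in hn.
have D0 : 0 <= dotp u u by apply: dotp_ge0.
set ig := gamma^-1.
have gig : gamma * ig = 1 by rewrite mulfV ?gt_eqF.
have ig0 : 0 < ig by rewrite invr_gt0.
have hA : dotp g p - dotp g xk <= - (ig * dotp u u).
  have : ig * (dotp u u - gamma * (dotp g xk - dotp g p)) <= 0.
    apply: mulr_ge0_le0; [exact: ltW| exact: vi2].
  rewrite mulrBr mulrA (mulrC ig gamma) gig mul1r; lra.
have hB : L <= ig.
  have : (L * gamma) * ig <= 1 * ig by rewrite ler_pM2r.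
  by rewrite -mulrA gig mulr1 mul1r.
have hC : L * dotp (xn - xk) (xn - xk) <= ig * dotp u u.
  apply: (@le_trans _ _ (L * dotp u u)); first by rewrite ler_pM2l.
  exact: ler_wpM2r.
have -> : gamma / 2 * (ig ^+ 2 * dotp u u) = ig * dotp u u / 2.
  by rewrite /ig; field; rewrite gt_eqF.
clearbody ig; lra.
Qed.
End Descent.


Unset Implicit Arguments.
Theorem theorem9 (R : realType) (d : nat) (X U : set 'rV[R]_d)
  (f : 'rV[R]_d -> R) (grad : 'rV[R]_d -> 'rV[R]_d) (L gamma : R)
  (P : 'rV[R]_d -> 'rV[R]_d) (xs : 'rV[R]_d) (x : nat -> 'rV[R]_d) :
  (* X nonempty, closed, convex *)
  X !=set0 -> closed X -> convex_set X ->
  (* f differentiable with gradient grad *)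
  (forall y, is_gradient f y (grad y)) ->
  (* L-smooth on an open set U containing X *)
  open U -> X `<=` U -> 0 < L ->
  (forall y z, U y -> U z -> enorm (grad y - grad z) <= L * enorm (y - z)) ->
  (* f_star = f xs = min over X, attained at xs *)
  X xs -> (forall y, X y -> f xs <= f y) ->
  (* P is the Euclidean projection onto X *)
  (forall y, is_proj X y (P y)) ->
  0 < gamma -> gamma <= L^-1 ->
  (* the iteration *)
  X (x 0%N) ->
  (forall k, is_argmin_lin (X `&` eball (x k) (gamma * enorm (grad_map P grad gamma (x k))))
                           (grad (x k)) (x k.+1)) ->
  (forall k, f (x k.+1) <= f (x k) - gamma / 2 * enorm (grad_map P grad gamma (x k)) ^+ 2)
  /\ (forall K : nat, (1 <= K)%N ->
        exists2 k : nat, (k < K)%N &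
          enorm (grad_map P grad gamma (x k)) ^+ 2 <= 2 * (f (x 0%N) - f xs) / (gamma * K%:R))
  /\ (gamma = L^-1 -> forall K : nat, (1 <= K)%N ->
        exists2 k : nat, (k < K)%N &
          enorm (grad_map P grad (L^-1) (x k)) ^+ 2 <= 2 * L * (f (x 0%N) - f xs) / K%:R).

Proof.
move=> _ _ cX hg _ XU L0 Lip Xs smin hP g0 gL X0 hit.
have Xk : forall k, X (x k) by case=> // k; case: (hit k) => [[]].
have p1 : forall k, f (x k.+1) <= f (x k) - gamma / 2 * enorm (grad_map P grad gamma (x k)) ^+ 2.
  by move=> k; apply: (step cX hg XU L0 Lip hP g0 gL (Xk k) (hit k)).
set a := fun k => enorm (grad_map P grad gamma (x k)) ^+ 2.
have tele : forall K, f (x K) <= f (x 0%N) - gamma / 2 * \sum_(0 <= k < K) a k.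
  elim=> [|K IH]; first by rewrite big_geq // mulr0 subr0.
  rewrite big_nat_recr //= mulrDr opprD addrA.
  apply: le_trans (p1 K) _; rewrite lerD2r; exact: IH.
have p2 : forall K : nat, (1 <= K)%N ->
        exists2 k : nat, (k < K)%N &
          a k <= 2 * (f (x 0%N) - f xs) / (gamma * K%:R).
  move=> K K1.
  set B := 2 * (f (x 0%N) - f xs) / (gamma * K%:R).
  case: (pselect (exists2 k : nat, (k < K)%N & a k <= B)) => // H; exfalso.
  have allk : forall k, (0 <= k < K)%N -> B < a k.
    move=> k /andP[_ kK]; rewrite ltNge; apply/negP => hk; apply: H; by exists k.
  have hs := ltr_sum_nat K1 allk.
  rewrite sumr_const_nat subn0 in hs.
  have KB : B *+ K = 2 * (f (x 0%N) - f xs) / gamma.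
    rewrite -mulr_natr /B; field.
    by rewrite gt_eqF //= pnatr_eq0 -lt0n.
  rewrite KB in hs.
  have hK := tele K; have := smin _ (Xk K).
  set S := \sum_(0 <= k < K) a k in hs hK.
  move=> hxs.
  have : gamma / 2 * (2 * (f (x 0%N) - f xs) / gamma) < gamma / 2 * S.
    by rewrite ltr_pM2l // divr_gt0.
  have -> : gamma / 2 * (2 * (f (x 0%N) - f xs) / gamma) = f (x 0%N) - f xs.
    by field; rewrite gt_eqF.
  lra.
split; first exact: p1.
split; first exact: p2.
move=> eg K K1; have [k kK hk] := p2 K K1.
exists k => //; move: hk; rewrite /a -eg.
have -> : 2 * L * (f (x 0%N) - f xs) / K%:R = 2 * (f (x 0%N) - f xs) / (gamma * K%:R).
  rewrite eg; field.
  by rewrite pnatr_eq0 -lt0n K1 gt_eqF.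
by [].
Qed.
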